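(* Setting and construction as in the context. Assume $g$ is convex and Lipschitz continuous. Then $\underline{v}$ is a continuous viscosity subsolution of $-v_t(t,x)+H(t,x,\nabla v(t,x))=0$ on $(0,T)\times\mathbb{R}^n$, where $H(t,x,p)=\max_{u\in\mathbb{U}}\min_{d\in\mathbb{D}}\langle -p,A(t)x+B(t)u+E(t)d\rangle$.
   Context: Fix $T>0$, integers $n,m,\ell\ge1$, $A\in C([0,T];\mathbb{R}^{n\times n})$, $B\in C([0,T];\mathbb{R}^{n\times m})$, $E\in C([0,T];\mathbb{R}^{n\times\ell})$, compact convex nonempty $\mathbb{U}\subset\mathbb{R}^m$, $\mathbb{D}\subset\mathbb{R}^\ell$, and $g\in C(\mathbb{R}^n;\mathbb{R})$. $D^-g(\bar x)$ is the set of $p\in\mathbb{R}^n$ with $\liminf_{x\to\bar x}\frac{g(x)-g(\bar x)-\langle p,x-\bar x\rangle}{\|x-\bar x\|}\ge0$. Construction: $N\in\mathbb{N}$, levels $\gamma_1,\dots,\gamma_N\in g(\mathbb{R}^n)$, $n_k\in\mathbb{N}$, points $\bar x_{i,k}\in g^{-1}(\{\gamma_k\})$ and $p_{i,k}\in D^-g(\bar x_{i,k})$; $(\lambda_{i,k},q_{i,k})$ is the solution on $[0,T]$ of $\dot\lambda(s)=-A(s)'\lambda(s)$, $\dot q(s)=\max_{u\in\mathbb{U}}\min_{d\in\mathbb{D}}\langle-\lambda(s),B(s)u+E(s)d\rangle$, with $\lambda_{i,k}(T)=p_{i,k}$, $q_{i,k}(T)=-\langle p_{i,k},\bar x_{i,k}\rangle+\gamma_k$;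 and $\underline{v}(t,x)=\max_{k}\max_{i}\big(\langle\lambda_{i,k}(t),x\rangle+q_{i,k}(t)\big)$. For continuous $f$ and $(t_0,x_0)\in(0,T)\times\mathbb{R}^n$, $D^+f(t_0,x_0)$ is the set of $(q,p)\in\mathbb{R}\times\mathbb{R}^n$ with $\limsup_{(t,x)\to(t_0,x_0)}\frac{f(t,x)-f(t_0,x_0)-\langle(q,p),(t,x)-(t_0,x_0)\rangle}{\|(t,x)-(t_0,x_0)\|}\le0$; $f$ is a viscosity subsolution if $-q+H(t_0,x_0,p)\le 0$ for all such $(t_0,x_0)$ and $(q,p)\in D^+f(t_0,x_0)$. *)

(* Defs.v *)
From HB Require Import structures.
From mathcomp Require Import all_boot all_order all_algebra.
From mathcomp Require Import all_classical all_reals all_analysis.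
Set Implicit Arguments. Unset Strict Implicit. Unset Printing Implicit Defensive.
Import Order.TTheory GRing.Theory Num.Theory.
Import numFieldNormedType.Exports.
Local Open Scope classical_set_scope.
Local Open Scope ring_scope.

Section Defs.
Variable R : realType.

Definition dotv (n : nat) (p x : 'cV[R]_n) : R := \sum_(i < n) p i 0 * x i 0.
Definition enorm (n : nat) (x : 'cV[R]_n) : R := Num.sqrt (dotv x x).

Definition convex_setv (n : nat) (S : set 'cV[R]_n) : Prop :=
  forall x y, S x -> S y -> forall t : R, 0 <= t <= 1 ->
    S (t *: x + (1 - t) *: y).

Definition convex_fun (n : nat) (g : 'cV[R]_n -> R) : Prop :=
  forall x y (t : R), 0 <= t <= 1 ->
    g (t *: x + (1 - t) *: y) <= t * g x + (1 - t) * g y.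

Definition lipschitz_fun (n : nat) (g : 'cV[R]_n -> R) : Prop :=
  exists L : R, forall x y, `|g x - g y| <= L * enorm (x - y).

(* max_{u in U} min_{d in D} f u d  (attained for compact nonempty U, D and
   continuous f, so written as sup/inf) *)
Definition maxmin (m l : nat) (U : set 'cV[R]_m) (D : set 'cV[R]_l)
  (f : 'cV[R]_m -> 'cV[R]_l -> R) : R :=
  sup [set inf [set f u d | d in D] | u in U].

Definition Ham (n m l : nat) (A : R -> 'M[R]_n) (B : R -> 'M[R]_(n, m))
  (E : R -> 'M[R]_(n, l)) (U : set 'cV[R]_m) (D : set 'cV[R]_l)
  (t : R) (x p : 'cV[R]_n) : R :=
  maxmin U D (fun u d => dotv (- p) (A t *m x + B t *m u + E t *m d)).

(* Frechet subdifferential D^- g(xb): liminf_{x -> xb} (...)/|x - xb| >= 0 *)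
Definition subdiff (n : nat) (g : 'cV[R]_n -> R) (xb p : 'cV[R]_n) : Prop :=
  forall eps : R, 0 < eps -> exists2 delta : R, 0 < delta &
    forall x, 0 < enorm (x - xb) < delta ->
      g x - g xb - dotv p (x - xb) >= - eps * enorm (x - xb).

Definition enorm_tx (n : nat) (t : R) (x : 'cV[R]_n) : R :=
  Num.sqrt (t ^+ 2 + dotv x x).

(* Frechet superdifferential D^+ f(t0,x0):
   limsup_{(t,x) -> (t0,x0)} (...)/|(t,x)-(t0,x0)| <= 0 *)
Definition superdiff (n : nat) (f : R -> 'cV[R]_n -> R) (t0 : R)
  (x0 : 'cV[R]_n) (qq : R) (pp : 'cV[R]_n) : Prop :=
  forall eps : R, 0 < eps -> exists2 delta : R, 0 < delta &
    forall t x, 0 < enorm_tx (t - t0) (x - x0) < delta ->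
      f t x - f t0 x0 - (qq * (t - t0) + dotv pp (x - x0))
        <= eps * enorm_tx (t - t0) (x - x0).

Definition continuous_at_tx (n : nat) (f : R -> 'cV[R]_n -> R) (t0 : R)
  (x0 : 'cV[R]_n) : Prop :=
  forall eps : R, 0 < eps -> exists2 delta : R, 0 < delta &
    forall t x, enorm_tx (t - t0) (x - x0) < delta -> `|f t x - f t0 x0| < eps.

Definition visc_subsol (n : nat) (T : R) (H : R -> 'cV[R]_n -> 'cV[R]_n -> R)
  (f : R -> 'cV[R]_n -> R) : Prop :=
  forall t0 x0, 0 < t0 < T -> forall qq pp, superdiff f t0 x0 qq pp ->
    - qq + H t0 x0 pp <= 0.

Definition vlow (n N : nat) (nk : 'I_N -> nat)
  (lam : forall k : 'I_N, 'I_(nk k) -> R -> 'cV[R]_n)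
  (q : forall k : 'I_N, 'I_(nk k) -> R -> R) (t : R) (x : 'cV[R]_n) : R :=
  sup [set y | exists (k : 'I_N) (i : 'I_(nk k)),
                 y = dotv (lam k i t) x + q k i t].

End Defs.

(* Main.v *)
Set Warnings "-all".
Require Import Defs.
From HB Require Import structures.
From mathcomp Require Import all_boot all_order all_algebra.
From mathcomp Require Import all_classical all_reals all_analysis ring lra.
Import Order.TTheory GRing.Theory Num.Theory.
Import numFieldNormedType.Exports.
Local Open Scope classical_set_scope.
Local Open Scope ring_scope.

Set Implicit Arguments. Unset Strict Implicit.

Section Helpers.
Variable R : realType.

Lemma mul_self_ge0 (x : R) : 0 <= x * x.
Proof. by rewrite -expr2 sqr_ge0. Qed.

Lemma dotvE n (p x : 'cV[R]_n) : dotv p x = (p^T *m x) 0 0.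
Proof. by rewrite /dotv !mxE; apply: eq_bigr => i _; rewrite mxE. Qed.

Lemma dotvC n (p x : 'cV[R]_n) : dotv p x = dotv x p.
Proof. by rewrite /dotv; apply: eq_bigr => i _; rewrite mulrC. Qed.

Lemma dotvDr n (p x y : 'cV[R]_n) : dotv p (x + y) = dotv p x + dotv p y.
Proof. by rewrite /dotv -big_split; apply: eq_bigr => i _; rewrite mxE mulrDr. Qed.

Lemma dotvDl n (p x y : 'cV[R]_n) : dotv (x + y) p = dotv x p + dotv y p.
Proof. by rewrite dotvC dotvDr dotvC [dotv p y]dotvC. Qed.

Lemma dotvNl n (p x : 'cV[R]_n) : dotv (- p) x = - dotv p x.
Proof. by rewrite /dotv -sumrN; apply: eq_bigr => i _; rewrite mxE mulNr. Qed.

Lemma dotvNr n (p x : 'cV[R]_n) : dotv p (- x) = - dotv p x.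
Proof. by rewrite dotvC dotvNl dotvC. Qed.

Lemma dotvBr n (p x y : 'cV[R]_n) : dotv p (x - y) = dotv p x - dotv p y.
Proof. by rewrite dotvDr dotvNr. Qed.

Lemma dotvBl n (p x y : 'cV[R]_n) : dotv (x - y) p = dotv x p - dotv y p.
Proof. by rewrite dotvDl dotvNl. Qed.

Lemma dotvZr n (a : R) (p x : 'cV[R]_n) : dotv p (a *: x) = a * dotv p x.
Proof. by rewrite /dotv mulr_sumr; apply: eq_bigr => i _; rewrite mxE mulrCA. Qed.

Lemma dotvZl n (a : R) (p x : 'cV[R]_n) : dotv (a *: p) x = a * dotv p x.
Proof. by rewrite dotvC dotvZr dotvC. Qed.

Lemma dotv0r n (p : 'cV[R]_n) : dotv p 0 = 0.
Proof. by rewrite /dotv big1 // => i _; rewrite mxE mulr0. Qed.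

Lemma dotv_mul n k (p : 'cV[R]_n) (M : 'M[R]_(n, k)) (x : 'cV[R]_k) :
  dotv p (M *m x) = dotv (M^T *m p) x.
Proof. by rewrite !dotvE trmx_mul trmxK mulmxA. Qed.

Lemma dotv_ge0 n (x : 'cV[R]_n) : 0 <= dotv x x.
Proof. by rewrite /dotv sumr_ge0 // => i _; rewrite mul_self_ge0. Qed.

Lemma coord_le_dot n (x : 'cV[R]_n) i : x i 0 * x i 0 <= dotv x x.
Proof.
rewrite /dotv (bigD1 i) //= lerDl sumr_ge0 // => j _; exact: mul_self_ge0.
Qed.

Lemma coord_le_enorm n (x : 'cV[R]_n) i : `|x i 0| <= enorm x.
Proof.
rewrite /enorm -(sqrtr_sqr (x i 0)) ler_wsqrtr // expr2; exact: coord_le_dot.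
Qed.

Lemma dotv_eq0 n (x : 'cV[R]_n) : dotv x x = 0 -> x = 0.
Proof.
move=> h; apply/matrixP => i j; rewrite (ord1 j) mxE.
have := coord_le_dot x i; rewrite h => h1.
have : x i 0 * x i 0 = 0 by apply/le_anti; rewrite h1 mul_self_ge0.
by move/eqP; rewrite mulf_eq0 orbb => /eqP.
Qed.

Lemma dot_bound n (a b : 'cV[R]_n) (M : R) :
  (forall i, `|a i 0| <= M) -> `|dotv a b| <= (\sum_i `|b i 0|) * M.
Proof.
move=> hM; rewrite /dotv mulr_suml (le_trans (ler_norm_sum _ _ _)) //.
apply: ler_sum => i _; rewrite normrM mulrC ler_wpM2l //.
Qed.

Lemma coord_le_mxnorm n k (x : 'M[R]_(n, k)) i j : `|x i j| <= `|x|.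
Proof.
have -> : `|x| = mx_norm x by [].
rewrite mx_normrE.
exact: (le_bigmax _ (fun ij : 'I_n * 'I_k => `|x ij.1 ij.2|) (i, j)).
Qed.

Lemma enorm_tx0x n (x : 'cV[R]_n) : enorm_tx 0 x = enorm x.
Proof. by rewrite /enorm_tx expr0n /= add0r. Qed.

Lemma enorm_txt0 n (t : R) : enorm_tx t (0 : 'cV[R]_n) = `|t|.
Proof. by rewrite /enorm_tx dotv0r addr0 sqrtr_sqr. Qed.

Lemma enormZ n (h : R) (x : 'cV[R]_n) : 0 <= h -> enorm (h *: x) = h * enorm x.
Proof.
move=> h0; rewrite /enorm dotvZl dotvZr mulrA sqrtrM ?mul_self_ge0 //.
by rewrite -expr2 sqrtr_sqr ger0_norm.
Qed.

Lemma abs_le_tx n (t : R) (x : 'cV[R]_n) : `|t| <= enorm_tx t x.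
Proof.
by rewrite /enorm_tx -sqrtr_sqr ler_wsqrtr // lerDl dotv_ge0.
Qed.

Lemma enorm_le_tx n (t : R) (x : 'cV[R]_n) : enorm x <= enorm_tx t x.
Proof.
by rewrite /enorm_tx /enorm ler_wsqrtr // lerDr sqr_ge0.
Qed.

End Helpers.

Section H2.
Variable R : realType.

Lemma sup_shiftf (T : Type) (D : set T) (g : T -> R) (c C : R) :
  D !=set0 -> (forall d, D d -> g d <= C) ->
  sup [set c + g d | d in D] = c + sup [set g d | d in D].
Proof.
move=> [d0 Dd0] hC.
have hs : has_sup [set g d | d in D].
  split; first by exists (g d0), d0.
  by exists C => _ [d Dd <-]; exact: hC.
have h1 : has_sup [set c] by split; [exists c | exists c => x ->].
rewrite -(sup1 c) -sup_sumE // sup1; congr sup.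
rewrite eqEsubset; split => x /=.
  by case=> d Dd <-; exists c => //; exists (g d) => //; exists d.
by case=> a -> [_ [d Dd <-] <-]; exists d.
Qed.

Lemma inf_shiftf (T : Type) (D : set T) (g : T -> R) (c C : R) :
  D !=set0 -> (forall d, D d -> C <= g d) ->
  inf [set c + g d | d in D] = c + inf [set g d | d in D].
Proof.
move=> [d0 Dd0] hC.
have hs : has_inf [set g d | d in D].
  split; first by exists (g d0), d0.
  by exists C => _ [d Dd <-]; exact: hC.
have h1 : has_inf [set c] by split; [exists c | exists c => x ->].
rewrite -(inf1 c) -inf_sumE // inf1; congr inf.
rewrite eqEsubset; split => x /=.
  by case=> d Dd <-; exists c => //; exists (g d) => //; exists d.
by case=> a -> [_ [d Dd <-] <-]; exists d.
Qed.

Lemma inf_bounds (T : Type) (D : set T) (g : T -> R) (C : R) :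
  D !=set0 -> (forall d, D d -> `|g d| <= C) ->
  `|inf [set g d | d in D]| <= C.
Proof.
move=> [d0 Dd0] hC.
have hl : has_lbound [set g d | d in D].
  by exists (- C) => _ [d Dd <-]; have := hC d Dd; rewrite ler_norml => /andP[].
rewrite ler_norml; apply/andP; split.
  apply: lb_le_inf; first by exists (g d0), d0.
  by move=> _ [d Dd <-]; have := hC d Dd; rewrite ler_norml => /andP[].
apply: le_trans (ge_inf hl _) _; first by exists d0.
by have := hC d0 Dd0; rewrite ler_norml => /andP[].
Qed.

Lemma maxmin_shift m l (U : set 'cV[R]_m) (D : set 'cV[R]_l) f (c C : R) :
  U !=set0 -> D !=set0 -> (forall u d, U u -> D d -> `|f u d| <= C) ->
  maxmin U D (fun u d => c + f u d) = c + maxmin U D f.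
Proof.
move=> U0 D0 hC; rewrite /maxmin.
have -> : [set inf [set c + f u d | d in D] | u in U] =
          [set c + inf [set f u d | d in D] | u in U].
  rewrite eqEsubset; split => x /= [u Uu <-]; exists u => //.
    by rewrite (@inf_shiftf _ _ _ _ (- C)) // => d Dd; have := hC u d Uu Dd; rewrite ler_norml => /andP[].
  by rewrite (@inf_shiftf _ _ _ _ (- C)) // => d Dd; have := hC u d Uu Dd; rewrite ler_norml => /andP[].
rewrite (@sup_shiftf _ _ _ _ C) // => u Uu.
by apply: le_trans (ler_norm _) _; apply: inf_bounds => // d Dd; exact: hC.
Qed.

End H2.

Section H3.
Variable R : realType.

Lemma compact_normbound m (U : set 'cV[R]_m) : compact U ->
  exists M, forall u, U u -> forall i, `|u i 0| <= M.
Proof.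
move=> /compact_bounded [M [_ hM]].
exists (`|M| + 1) => u Uu i; apply: le_trans (coord_le_mxnorm u i 0) _.
apply: (hM (`|M| + 1)) => //.
rewrite (le_lt_trans (ler_norm M)) // ltrDl //.
Qed.

Lemma maxmin_bound n m l (U : set 'cV[R]_m) (D : set 'cV[R]_l)
  (B : 'M[R]_(n, m)) (E : 'M[R]_(n, l)) (a : 'cV[R]_n) :
  compact U -> compact D -> exists C, forall u d, U u -> D d ->
    `|dotv a (B *m u + E *m d)| <= C.
Proof.
move=> /compact_normbound [M1 h1] /compact_normbound [M2 h2].
exists ((\sum_i `|(B^T *m a) i 0|) * M1 + (\sum_i `|(E^T *m a) i 0|) * M2).
move=> u d Uu Dd; rewrite dotvDr !dotv_mul.
apply: le_trans (ler_normD _ _) _; apply: lerD; rewrite dotvC; apply: dot_bound.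
  exact: h1.
exact: h2.
Qed.

End H3.

Section H4.
Variable R : realType.

Lemma finmax (J : finType) (j0 : J) (F : J -> R) :
  exists j, forall j', F j' <= F j.
Proof.
case: (@arg_maxP _ _ J j0 xpredT F isT) => j _ h.
by exists j => j'; exact: h.
Qed.

Lemma vlow_max n N (nk : 'I_N -> nat)
  (lam : forall k : 'I_N, 'I_(nk k) -> R -> 'cV[R]_n)
  (q : forall k : 'I_N, 'I_(nk k) -> R -> R) :
  (0 < N)%N -> (forall k, 0 < nk k)%N -> forall t x,
  exists k i, vlow lam q t x = dotv (lam k i t) x + q k i t /\
    forall k' i', dotv (lam k' i' t) x + q k' i' t <= vlow lam q t x.
Proof.
move=> N0 nk0 t x.
pose J := {k : 'I_N & 'I_(nk k)}.
pose F (j : J) := dotv (lam (tag j) (tagged j) t) x + q (tag j) (tagged j) t.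
pose k0 := Ordinal N0.
have [j hj] := finmax (Tagged (fun k => 'I_(nk k)) (Ordinal (nk0 k0))) F.
have hmax : forall k' i', dotv (lam k' i' t) x + q k' i' t <= F j.
  by move=> k' i'; exact: (hj (Tagged (fun k => 'I_(nk k)) i')).
have -> : vlow lam q t x = F j.
  apply/le_anti/andP; split.
    apply: ge_sup; first by exists (F j), (tag j), (tagged j).
    by move=> y [k [i ->]].
  apply: ub_le_sup; first by exists (F j) => y [k [i ->]].
  by exists (tag j), (tagged j).
by exists (tag j), (tagged j); split.
Qed.

End H4.

Section H5.
Variable R : realType.

Lemma near_delta (P : R -> Prop) (t0 : R) : (\forall t \near t0, P t) ->
  exists2 d, 0 < d & forall t, `|t - t0| < d -> P t.
Proof.
move=> /nbhs_ballP [d d0 hd]; exists d => // t ht; apply: hd.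
by rewrite /ball /= distrC.
Qed.

Lemma cont_int (V : normedModType R) (f : R -> V) (T t0 : R) :
  0 < t0 < T -> {within `[0, T], continuous f} ->
  forall e, 0 < e -> exists2 d, 0 < d & forall t, `|t - t0| < d -> `|f t - f t0| < e.
Proof.
move=> /andP[t00 t0T] hc e e0.
have T0 : 0 < T by apply: lt_trans t0T.
have [hin _ _] := (continuous_within_itvP f T0).1 hc.
have ct0 : {for t0, continuous f}.
  by apply: hin; rewrite in_itv /= t00 t0T.
have [d d0 hd] := near_delta ((cvgrPdist_lt _ _).1 ct0 e e0).
exists d => // t ht.
by rewrite distrC; exact: hd.
Qed.

Lemma deriv_ed (V : normedModType R) (f : R -> V) (t0 : R) df :
  is_derive t0 1 f df -> forall e, 0 < e -> exists2 d, 0 < d &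
    forall h, `|h| < d -> `|f (t0 + h) - f t0 - h *: df| <= e * `|h|.
Proof.
move=> hd e e0.
have hc := @ex_derive _ _ _ _ _ _ _ hd.
have hv := @derive_val _ _ _ _ _ _ _ hd.
rewrite /derivable in hc; rewrite /derive in hv; rewrite hv in hc.
have [d d0 hdd] := near_delta ((cvgrPdist_le _ _).1 hc e e0).
exists d => // h hh.
have [->|h0] := eqVneq h 0.
  by rewrite addr0 subrr scale0r subr0 !normr0 mulr0.
have := hdd h; rewrite subr0 => /(_ hh h0).
have -> : (f \o shift t0) h%:A = f (t0 + h) by rewrite /= /shift /= addrC -[h%:A]/(h *: 1) scaler1.
move=> H.
have -> : f (t0 + h) - f t0 - h *: df = h *: (h^-1 *: (f (t0 + h) - f t0) - df).
  by rewrite scalerBr scalerA divff // scale1r.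
by rewrite normrZ mulrC ler_wpM2r // distrC.
Qed.

End H5.

Section H6.
Variable R : realType.

Lemma sum_abs_le n (a : 'cV[R]_n) (M : R) : (forall i, `|a i 0| <= M) ->
  \sum_i `|a i 0| <= n%:R * M.
Proof.
move=> h; apply: le_trans (ler_sum _ (fun i _ => h i)) _.
by rewrite sumr_const card_ord mulr_natl.
Qed.

Lemma phi_cont n (lam : R -> 'cV[R]_n) (qf : R -> R) (T t0 : R) (x0 : 'cV[R]_n) :
  0 < t0 < T -> {within `[0, T], continuous lam} ->
  {within `[0, T], continuous qf} ->
  forall e, 0 < e -> exists2 d, 0 < d & forall t x,
    enorm_tx (t - t0) (x - x0) < d ->
    `|(dotv (lam t) x + qf t) - (dotv (lam t0) x0 + qf t0)| < e.
Proof.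
move=> ht0 hl hq e e0.
pose K0 := \sum_i `|x0 i 0|.
pose K1 := \sum_i `|lam t0 i 0|.
have K00 : 0 <= K0 by apply: sumr_ge0 => i _.
have K10 : 0 <= K1 by apply: sumr_ge0 => i _.
pose C := K0 + n%:R + K1 + 1.
have C0 : 0 < C by rewrite /C; apply: lt_le_trans (ltr01) _; rewrite lerDr !addr_ge0.
pose eps := Num.min 1 (e / C).
have eps0 : 0 < eps by rewrite lt_min ltr01 divr_gt0.
have eps1 : eps <= 1 by rewrite ge_min lexx.
have epsC : eps * C <= e by rewrite -ler_pdivlMr // ge_min lexx orbT.
have [dl dl0 hdl] := cont_int ht0 hl eps0.
have [dq dq0 hdq] := cont_int ht0 hq eps0.
pose d := Num.min (Num.min dl dq) eps.
exists d; first by rewrite /d lt_min eps0 andbT lt_min dl0 dq0.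
move=> t x htx.
have hd1 : `|t - t0| < dl.
  apply: le_lt_trans (abs_le_tx _ (x - x0)) _; apply: lt_le_trans htx _.
  by rewrite !ge_min lexx.
have hd2 : `|t - t0| < dq.
  apply: le_lt_trans (abs_le_tx _ (x - x0)) _; apply: lt_le_trans htx _.
  by rewrite /d ge_min ge_min lexx orbT.
have hx : forall i, `|(x - x0) i 0| <= eps.
  move=> i; apply: le_trans (coord_le_enorm _ i) _.
  apply: le_trans (enorm_le_tx (t - t0) _) _; apply: ltW; apply: lt_le_trans htx _.
  by rewrite /d ge_min lexx orbT.
have hL : forall i, `|(lam t - lam t0) i 0| <= eps.
  by move=> i; apply: le_trans (coord_le_mxnorm _ i 0) _; apply/ltW/hdl.
have E1 : `|dotv (lam t - lam t0) x0| <= K0 * eps by apply: dot_bound.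
have E2 : `|dotv (lam t - lam t0) (x - x0)| <= n%:R * eps.
  rewrite dotvC; apply: le_trans (dot_bound _ hx) _.
  apply: le_trans (ler_wpM2r (ltW eps0) (sum_abs_le hL)) _.
  by rewrite -mulrA ler_wpM2l // ler_piMr // ltW.
have E3 : `|dotv (lam t0) (x - x0)| <= K1 * eps.
  by rewrite dotvC; apply: dot_bound.
have E4 : `|qf t - qf t0| < eps by apply: hdq.
have -> : dotv (lam t) x + qf t - (dotv (lam t0) x0 + qf t0) =
  dotv (lam t - lam t0) x0 + dotv (lam t - lam t0) (x - x0) +
  dotv (lam t0) (x - x0) + (qf t - qf t0).
  rewrite !dotvBl !dotvBr; ring.
move: E1 E2 E3 E4; rewrite !ler_norml !ltr_norml => /andP[? ?] /andP[? ?] /andP[? ?] /andP[? ?].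
rewrite /C in epsC; lra.
Qed.

Lemma fin_delta (J : finType) (P : J -> R -> Prop) :
  (forall j d d', 0 < d' <= d -> P j d -> P j d') ->
  (forall j, exists2 d, 0 < d & P j d) -> exists2 d, 0 < d & forall j, P j d.
Proof.
move=> mono h.
have /choice [df hdf] : forall j, exists d, 0 < d /\ P j d.
  by move=> j; have [d ? ?] := h j; exists d.
case: (pickP (fun _ : J => true)) => [j0 _|none].
  have [jm hjm] := finmax j0 (fun j => - df j).
  exists (df jm); first by case: (hdf jm).
  move=> j; apply: (mono j (df j)); last by case: (hdf j).
  by case: (hdf jm) => -> _ /=; have := hjm j; rewrite lerN2.
by exists 1 => // j; have := none j.
Qed.

End H6.

Unset Implicit Arguments. Set Strict Implicit.

Theorem lemma5 (R : realType) (T : R) (n m l : nat)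
  (A : R -> 'M[R]_n) (B : R -> 'M[R]_(n, m)) (E : R -> 'M[R]_(n, l))
  (U : set 'cV[R]_m) (D : set 'cV[R]_l) (g : 'cV[R]_n -> R)
  (N : nat) (gam : 'I_N -> R) (nk : 'I_N -> nat)
  (xb : forall k : 'I_N, 'I_(nk k) -> 'cV[R]_n)
  (p : forall k : 'I_N, 'I_(nk k) -> 'cV[R]_n)
  (lam : forall k : 'I_N, 'I_(nk k) -> R -> 'cV[R]_n)
  (q : forall k : 'I_N, 'I_(nk k) -> R -> R) :
  0 < T -> (0 < n)%N -> (0 < m)%N -> (0 < l)%N ->
  {within `[0, T], continuous A} ->
  {within `[0, T], continuous B} ->
  {within `[0, T], continuous E} ->
  compact U -> convex_setv U -> U !=set0 ->
  compact D -> convex_setv D -> D !=set0 ->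
  continuous g -> convex_fun g -> lipschitz_fun g ->
  (0 < N)%N -> (forall k, 0 < nk k)%N ->
  (forall k, exists x, g x = gam k) ->
  (forall k i, g (xb k i) = gam k) ->
  (forall k i, subdiff g (xb k i) (p k i)) ->
  (* (lam_{i,k}, q_{i,k}) solves the terminal-value problem on [0,T] *)
  (forall k i, {within `[0, T], continuous (lam k i)}) ->
  (forall k i, {within `[0, T], continuous (q k i)}) ->
  (forall k i s, 0 < s < T ->
     is_derive s 1 (lam k i) (- ((A s)^T *m lam k i s))) ->
  (forall k i s, 0 < s < T ->
     is_derive s 1 (q k i)
       (maxmin U D (fun u d => dotv (- lam k i s) (B s *m u + E s *m d)))) ->
  (forall k i, lam k i T = p k i) ->
  (forall k i, q k i T = - dotv (p k i) (xb k i) + gam k) ->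
  (forall t0 x0, 0 < t0 < T -> continuous_at_tx (vlow lam q) t0 x0) /\
  visc_subsol T (Ham A B E U D) (vlow lam q).
Proof.
move=> T0 n0 m0 l0 cA cB cE cU vU U0 cD vD D0 cg vg lg N0 nk0 hgam hxb hsub
  clam cq dlam dq lamT qT.
split.
  move=> t0 x0 ht0 e e0.
  pose P := (fun (j : {k : 'I_N & 'I_(nk k)}) d => forall t x, enorm_tx (t - t0) (x - x0) < d ->
      `|(dotv (lam (tag j) (tagged j) t) x + q (tag j) (tagged j) t) -
        (dotv (lam (tag j) (tagged j) t0) x0 + q (tag j) (tagged j) t0)| < e).
  have Pm : forall j d1 d2, 0 < d2 <= d1 -> P j d1 -> P j d2.
    move=> j d1 d2 /andP[_ le] h t x htx; apply: h; exact: lt_le_trans htx le.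
  have Pe : forall j, exists2 d, 0 < d & P j d.
    move=> j; exact: phi_cont ht0 (clam _ _) (cq _ _) e e0.
  have [d d0 hd] := fin_delta Pm Pe.
  exists d => // t x htx.
  have [a [ia [ha _]]] := vlow_max lam q N0 nk0 t x.
  have [_ [_ [_ hbm']]] := vlow_max lam q N0 nk0 t x.
  have [b [ib [hb hbm]]] := vlow_max lam q N0 nk0 t0 x0.
  have := hd (Tagged (fun k => 'I_(nk k)) ia) t x htx.
  have := hd (Tagged (fun k => 'I_(nk k)) ib) t x htx.
  have := hbm a ia; have := hbm' b ib => /=.
  rewrite !ltr_norml ha hb => ? ? /andP[? ?] /andP[? ?].
  lra.
move=> t0 x0 ht0 qq pp hsd; rewrite /Ham.
have [k [i [hv hvm]]] := vlow_max lam q N0 nk0 t0 x0.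
set L := lam k i t0.
have hpp : pp = L.
  apply/eqP; rewrite eq_sym -subr_eq0; apply/eqP.
  set w := L - pp; apply: dotv_eq0.
  apply/eqP; apply/negP => /negP hw.
  have ww0 : 0 < dotv w w by rewrite lt_def hw dotv_ge0.
  set s := enorm w.
  have s0 : 0 < s by rewrite /s /enorm sqrtr_gt0.
  have ss : s * s = dotv w w by rewrite /s /enorm -expr2 sqr_sqrtr // dotv_ge0.
  have s20 : 0 < s / 2 by rewrite divr_gt0.
  have [del del0 hdel] := hsd (s / 2) s20.
  set h := del / (2 * s).
  have h0 : 0 < h by rewrite divr_gt0 // mulr_gt0.
  have hs : h * s = del / 2 by rewrite /h; field; rewrite gt_eqF.
  have ex : x0 + h *: w - x0 = h *: w by rewrite addrAC subrr add0r.
  have en : enorm_tx (t0 - t0) (x0 + h *: w - x0) = del / 2.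
    by rewrite ex subrr enorm_tx0x enormZ ?ltW // hs.
  have pr : 0 < enorm_tx (t0 - t0) (x0 + h *: w - x0) < del.
    rewrite en; apply/andP; split; first by rewrite divr_gt0.
    lra.
  have H2 := hdel t0 (x0 + h *: w) pr.
  rewrite en in H2.
  have [_ [_ [_ hm]]] := vlow_max lam q N0 nk0 t0 (x0 + h *: w).
  have H1 := hm k i.
  rewrite hv -/L dotvDr !dotvZr in H1 H2.
  have e1 : dotv L w - dotv pp w = s * s by rewrite ss /w dotvBl dotvC [dotv pp w]dotvC.
  have X0 : 0 < h * (s * s) by rewrite mulr_gt0 // mulr_gt0.
  have e2 : h * dotv L w - h * dotv pp w = h * (s * s) by rewrite -e1 mulrBr.
  have e3 : s / 2 * (del / 2) = h * (s * s) / 2.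
    by rewrite -hs; field.
  rewrite e3 in H2.
  rewrite ex subrr mulr0 add0r dotvZr in H2.   lra.
set lam' := - ((A t0)^T *m L).
set M := maxmin U D (fun u d => dotv (- L) (B t0 *m u + E t0 *m d)).
set G := dotv lam' x0 + M.
pose K0 := \sum_i `|x0 i 0|.
have K00 : 0 <= K0 by apply: sumr_ge0 => ? _.
have claim : forall e, 0 < e -> `|G - qq| <= (K0 + 2) * e.
  move=> e e0.
  have [d1 d10 hd1] := deriv_ed (dlam k i t0 ht0) e0.
  have [d2 d20 hd2] := deriv_ed (dq k i t0 ht0) e0.
  have [d3 d30 hd3] := hsd e e0.
  set c := Num.min (Num.min d1 d2) d3 / 2.
  have dm0 : 0 < Num.min (Num.min d1 d2) d3 by rewrite lt_min d30 andbT lt_min d10 d20.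
  have c0 : 0 < c by rewrite divr_gt0.
  have cm : c < Num.min (Num.min d1 d2) d3 by rewrite /c; lra.
  have c1 : c < d1 by apply: lt_le_trans cm _; rewrite ge_min ge_min lexx.
  have c2 : c < d2 by apply: lt_le_trans cm _; rewrite ge_min ge_min lexx orbT.
  have c3 : c < d3 by apply: lt_le_trans cm _; rewrite ge_min lexx orbT.
  have key : forall h, `|h| = c -> h * (G - qq) <= (K0 + 2) * e * c.
    move=> h hc.
    have := hd1 h; rewrite hc => /(_ c1) H1.
    have := hd2 h; rewrite hc => /(_ c2) H2.
    have := hd3 (t0 + h) x0.
    have -> : t0 + h - t0 = h by rewrite addrAC subrr add0r.
    rewrite subrr enorm_txt0 hc c0 c3 => /(_ isT) H3.
    have [_ [_ [_ hm]]] := vlow_max lam q N0 nk0 (t0 + h) x0.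
    have H4 := hm k i.
    have H5 : `|dotv (lam k i (t0 + h) - lam k i t0 - h *: lam') x0| <= K0 * (e * c).
      apply: dot_bound => j; apply: le_trans (coord_le_mxnorm _ j 0) _; exact: H1.
    rewrite !dotvBl dotvZl dotv0r in H5 H3.
    rewrite -/L in H5.
    move: H5 H2; rewrite !ler_norml => /andP[a1 a2] /andP[b1 b2].
    rewrite /G; rewrite hv in H3.
    rewrite -/L -/M in a1 a2 b1 b2 H3 H4.
    have hM : h *: M = h * M by [].
    rewrite hM in b1 b2.
    lra.
  have k1 := key c (gtr0_norm c0).
  have k2 : - c * (G - qq) <= (K0 + 2) * e * c by apply: key; rewrite normrN gtr0_norm.
  rewrite ler_norml; apply/andP; split.
    rewrite -(ler_pM2l c0); lra.
  rewrite -(ler_pM2l c0); lra.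
have hqq : qq = G.
  apply/eqP; rewrite eq_sym -subr_eq0 -normr_eq0; apply/eqP.
  have [//|hne] := eqVneq `|G - qq| 0; exfalso.
  have a0 : 0 < `|G - qq| by rewrite lt_def hne normr_ge0.
  have K2 : 0 < K0 + 2 by lra.
  have := claim (`|G - qq| / (2 * (K0 + 2))) (divr_gt0 a0 (mulr_gt0 (ltr0Sn _ 1) K2)).
  have -> : (K0 + 2) * (`|G - qq| / (2 * (K0 + 2))) = `|G - qq| / 2.
    by field; rewrite gt_eqF.
  lra.
rewrite hpp hqq.
have -> : (fun u d => dotv (- L) (A t0 *m x0 + B t0 *m u + E t0 *m d)) =
  (fun u d => dotv (- L) (A t0 *m x0) + dotv (- L) (B t0 *m u + E t0 *m d)).
  by apply/funext => u; apply/funext => d; rewrite -addrA dotvDr.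
have [C hC] := maxmin_bound (B t0) (E t0) (- L) cU cD.
rewrite (maxmin_shift (f := fun u d => dotv (- L) (B t0 *m u + E t0 *m d))
  (dotv (- L) (A t0 *m x0)) U0 D0 hC) -/M.
rewrite /G /lam' !dotvNl dotv_mul.
lra.
Qed.
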